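(* Let $\alpha=[a_0;a_1,a_2,\dots]$ be irrational with convergents $p_k/q_k$, and for integers $k\ge1$, $0\le M<q_k$ let \[ B_{k,M}(x)= \log \frac{P_M (\alpha, (-1)^k x/q_k)}{P_M (p_k/q_k, (-1)^k x/q_k)} - \sum_{n=1}^M \sin (\pi n \| q_k \alpha \| /q_k ) \cot \left( \pi \frac{n (-1)^k p_k+x}{q_k} \right) . \] (i) Let $k \ge 1$ and $0 \le M < q_k$ be integers, and assume that $q_k \| q_k \alpha \| \le 1-c_k$ and $-1<x \le 1-\frac{q_k \| q_k \alpha \|}{1-c_k}$ for some $c_k$ with $10/q_k^2 \le c_k<1$. Then \[ -C \frac{\log (4/c_k)}{(1-|x|)^2 a_{k+1}^2} \le B_{k,M}(x) \le C \frac{1}{a_{k+1}^2 q_k} \] with a universal constant $C>0$. (ii) Let $N=\sum_{k=0}^{K-1} b_k q_k$ be the Ostrowski expansion of a non-negative integer. For any $1 \le k \le K-1$, any $0 \le M <q_k$ and any $0 \le b \le b_k-1$, \[ B_{k,M}(b q_k \| q_k \alpha \| + \varepsilon_k (N)) \le C \frac{1}{a_{k+1}^2q_k} \] with a universal constant $C>0$.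
   Context: $P_N(\beta,x)=\prod_{n=1}^N|2\sin(\pi(n\beta+x))|$. $p_k/q_k=[a_0;a_1,\dots,a_k]$; $\|y\|$ is distance to nearest integer. Ostrowski expansion: the unique representation $N=\sum_{k=0}^{K-1}b_kq_k$ with integers $0\le b_0<a_1$, $0\le b_k\le a_{k+1}$, and $b_{k-1}=0$ whenever $b_k=a_{k+1}$. $\varepsilon_k(N):=q_k\sum_{\ell=k+1}^{K-1}(-1)^{k+\ell}b_\ell\|q_\ell\alpha\|$. *)

(* Defs.v *)
From Stdlib Require Import Reals ZArith Lra List.
Import ListNotations.
Open Scope R_scope.

(* floor of a real: Stdlib's Int_part r = up r - 1 is the floor. *)
Definition floorZ (r : R) : Z := Int_part r.

Fixpoint cquot (alpha : R) (k : nat) : R :=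
  match k with
  | O => alpha
  | S k' => / (cquot alpha k' - IZR (floorZ (cquot alpha k')))
  end.

Definition cf_a (alpha : R) (k : nat) : Z := floorZ (cquot alpha k).

(* ((p_k, q_k), (p_{k-1}, q_{k-1})) with p_{-1} = 1, q_{-1} = 0 *)
Fixpoint conv_pair (alpha : R) (k : nat) : (Z * Z) * (Z * Z) :=
  match k with
  | O => ((cf_a alpha 0, 1%Z), (1%Z, 0%Z))
  | S k' =>
      let '((p, q), (p', q')) := conv_pair alpha k' in
      let a := cf_a alpha (S k') in
      (((a * p + p')%Z, (a * q + q')%Z), (p, q))
  end.

Definition cf_p (alpha : R) (k : nat) : Z := fst (fst (conv_pair alpha k)).
Definition cf_q (alpha : R) (k : nat) : Z := snd (fst (conv_pair alpha k)).

Definition irrational (alpha : R) : Prop :=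
  forall (p q : Z), q <> 0%Z -> alpha <> IZR p / IZR q.

Definition dist_int (y : R) : R :=
  Rmin (y - IZR (floorZ y)) (IZR (floorZ y) + 1 - y).

Fixpoint Pprod (N : nat) (beta x : R) : R :=
  match N with
  | O => 1
  | S n => Pprod n beta x * Rabs (2 * sin (PI * (INR (S n) * beta + x)))
  end.

Definition cot (y : R) : R := cos y / sin y.

Fixpoint Bsum (alpha : R) (k M : nat) (x : R) : R :=
  match M with
  | O => 0
  | S n => Bsum alpha k n x +
      sin (PI * INR (S n) * dist_int (IZR (cf_q alpha k) * alpha) / IZR (cf_q alpha k))
      * cot (PI * (INR (S n) * (-1) ^ k * IZR (cf_p alpha k) + x) / IZR (cf_q alpha k))
  end.

Definition B (alpha : R) (k M : nat) (x : R) : R :=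
  let qk := IZR (cf_q alpha k) in
  let pk := IZR (cf_p alpha k) in
  ln (Pprod M alpha ((-1) ^ k * x / qk) / Pprod M (pk / qk) ((-1) ^ k * x / qk))
  - Bsum alpha k M x.

(* Ostrowski expansion N = sum_{k<K} b_k q_k : digit conditions *)
Definition ostrowski_digits (alpha : R) (b : nat -> nat) (K : nat) : Prop :=
  (K > 0)%nat ->
  (Z.of_nat (b 0%nat) < cf_a alpha 1)%Z /\
  (forall k, (k < K)%nat -> (Z.of_nat (b k) <= cf_a alpha (S k))%Z) /\
  (forall k, (1 <= k)%nat -> (k < K)%nat ->
      Z.of_nat (b k) = cf_a alpha (S k) -> b (k - 1)%nat = 0%nat).

Definition eps (alpha : R) (b : nat -> nat) (K k : nat) : R :=
  IZR (cf_q alpha k) *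
  fold_right Rplus 0
    (map (fun l => (-1) ^ (k + l) * INR (b l) * dist_int (IZR (cf_q alpha l) * alpha))
         (seq (S k) (K - S k))).

(* Main.v *)
Require Import Defs.
From Stdlib Require Import Reals ZArith Lra Lia List Psatz.
From Coquelicot Require Import Coquelicot.
Open Scope R_scope.


Lemma ln_le_m1 w : 0 < w -> ln w <= w - 1.
Proof.
  intro Hw. pose proof (exp_ineq1_le (ln w)). rewrite exp_ln in H; lra.
Qed.

Lemma ln_ge_inv w : 0 < w -> 1 - / w <= ln w.
Proof.
  intro Hw. pose proof (ln_le_m1 (/ w) (Rinv_0_lt_compat _ Hw)).
  rewrite ln_Rinv in H by lra. lra.
Qed.

Lemma sin_le_id h : 0 <= h -> sin h <= h.
Proof.
  intro Hh.
  pose proof (IAF sin 0 h 1 derivable_sin Hh) as H.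
  rewrite sin_0 in H.
  assert (forall c, 0 <= c <= h -> derive_pt sin c (derivable_sin c) <= 1).
  { intros c _. rewrite (derive_pt_eq_0 sin c (cos c) (derivable_sin c) (derivable_pt_lim_sin c)). pose proof (COS_bound c); lra. }
  specialize (H H0). lra.
Qed.

Lemma one_minus_cos h : 0 <= h -> 1 - cos h <= h ^ 2 / 2.
Proof.
  intro Hh.
  assert (pr1 : derivable (fun t => t ^ 2 / 2)).
  { intro t. apply ex_derive_Reals_0. auto_derive. auto. }
  assert (pr2 : derivable (fun t => 1 - cos t)).
  { intro t. apply ex_derive_Reals_0. auto_derive. auto. }
  pose proof (IAF_var (fun t => t ^ 2 / 2) (fun t => 1 - cos t) 0 h pr1 pr2 Hh) as H.
  simpl in H. rewrite cos_0 in H.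
  assert (forall c, 0 <= c <= h -> derive_pt (fun t => 1 - cos t) c (pr2 c) <=
     derive_pt (fun t => t ^ 2 / 2) c (pr1 c)).
  { intros c Hc.
    rewrite (derive_pt_eq_0 _ _ (sin c) (pr2 c)).
    rewrite (derive_pt_eq_0 _ _ c (pr1 c)).
    - apply sin_le_id; lra.
    - apply is_derive_Reals. auto_derive; auto. field.
    - apply is_derive_Reals. auto_derive; auto. ring. }
  specialize (H H0). lra.
Qed.

Lemma g_nonpos t : 0 <= t <= PI -> t * cos t - sin t <= 0.
Proof.
  intro Ht.
  assert (pr : derivable (fun t => sin t - t * cos t)).
  { intro u. apply ex_derive_Reals_0. auto_derive. auto. }
  destruct (Req_dec t 0) as [->|Hn].
  { rewrite sin_0; lra. }
  pose proof (derive_increasing_interv_var 0 PI _ pr PI_RGT_0) as H.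
  assert (forall u, 0 < u < PI -> 0 <= derive_pt _ u (pr u)).
  { intros u Hu. rewrite (derive_pt_eq_0 _ _ (u * sin u) (pr u)).
    - pose proof (sin_gt_0 u (proj1 Hu) (proj2 Hu)). nra.
    - apply is_derive_Reals. auto_derive; auto. ring. }
  specialize (H H0 0 t). simpl in H.
  assert (0 <= 0 <= PI) by (pose proof PI_RGT_0; lra).
  specialize (H H1 Ht ltac:(lra)). rewrite sin_0 in H. lra.
Qed.

Lemma sin_ratio A Bv : 0 < A -> A <= Bv -> Bv <= PI -> A * sin Bv <= Bv * sin A.
Proof.
  intros HA HAB HB.
  destruct (Req_dec A Bv) as [<-|Hne]. { lra. }
  assert (pr : derivable (fun t => t * sin A - A * sin t)).
  { intro u. apply ex_derive_Reals_0. auto_derive. auto. }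
  pose proof (derive_increasing_interv_var A PI _ pr ltac:(lra)) as H.
  assert (forall u, A < u < PI -> 0 <= derive_pt _ u (pr u)).
  { intros u Hu. rewrite (derive_pt_eq_0 _ _ (sin A - A * cos u) (pr u)).
    - pose proof (g_nonpos A ltac:(lra)).
      pose proof (cos_decr_1 A u ltac:(lra) ltac:(lra) ltac:(lra) ltac:(lra) ltac:(lra)).
      nra.
    - apply is_derive_Reals. auto_derive; auto. ring. }
  specialize (H H0 A Bv ltac:(lra) ltac:(lra) ltac:(lra)). simpl in H. lra.
Qed.

Lemma jordan v : 0 <= v <= PI / 2 -> 2 * v / PI <= sin v.
Proof.
  intro Hv. pose proof PI_RGT_0.
  destruct (Req_dec v 0) as [->|Hn]. { rewrite sin_0. lra. }
  pose proof (sin_ratio v (PI/2) ltac:(lra) ltac:(lra) ltac:(lra)).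
  rewrite sin_PI2 in H0.
  apply (Rmult_le_reg_r (PI / 2)); [lra|]. field_simplify; lra.
Qed.


Fixpoint sum1 (f : nat -> R) (N : nat) : R :=
  match N with O => 0 | S n => sum1 f n + f (S n) end.

Lemma sum1_ext f g N : (forall m, (1 <= m <= N)%nat -> f m = g m) -> sum1 f N = sum1 g N.
Proof.
  induction N; intros H; simpl; auto.
  rewrite IHN by (intros; apply H; lia). rewrite H by lia. auto.
Qed.

Lemma sum1_le f g N : (forall m, (1 <= m <= N)%nat -> f m <= g m) -> sum1 f N <= sum1 g N.
Proof.
  induction N; intros H; simpl; [lra|].
  pose proof (IHN ltac:(intros; apply H; lia)). pose proof (H (S N) ltac:(lia)). lra.
Qed.

Lemma sum1_plus f g N : sum1 (fun m => f m + g m) N = sum1 f N + sum1 g N.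
Proof. induction N; simpl; [lra|]. rewrite IHN. lra. Qed.

Lemma sum1_scal c f N : sum1 (fun m => c * f m) N = c * sum1 f N.
Proof. induction N; simpl; [lra|]. rewrite IHN. lra. Qed.

Lemma sum1_const c N : sum1 (fun _ => c) N = INR N * c.
Proof. induction N; simpl sum1; [simpl; lra|]. rewrite IHN, S_INR. lra. Qed.

Lemma sum1_exch (g : nat -> nat -> R) M N :
  sum1 (fun n => sum1 (fun m => g n m) N) M = sum1 (fun m => sum1 (fun n => g n m) M) N.
Proof.
  induction M; simpl.
  - induction N; simpl; lra.
  - rewrite IHM. rewrite <- sum1_plus. reflexivity.
Qed.

Definition ind (a b : nat) : R := if Nat.eqb a b then 1 else 0.

Lemma sum_ind F N r : (1 <= r <= N)%nat -> sum1 (fun m => ind r m * F m) N = F r.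
Proof.
  induction N; intros H; [lia|]. simpl.
  destruct (Nat.eq_dec r (S N)) as [->|Hne].
  - rewrite (sum1_ext _ (fun _ => 0)).
    + rewrite sum1_const. unfold ind. rewrite Nat.eqb_refl. lra.
    + intros m Hm. unfold ind. destruct (Nat.eqb_spec (S N) m); [lia|lra].
  - rewrite IHN by lia. unfold ind. destruct (Nat.eqb_spec r (S N)); [lia|lra].
Qed.

Lemma count_le (r : nat -> nat) M m :
  (forall n1 n2, (1 <= n1 <= M)%nat -> (1 <= n2 <= M)%nat -> r n1 = r n2 -> n1 = n2) ->
  sum1 (fun n => ind (r n) m) M <= 1.
Proof.
  induction M; intros Hinj; simpl; [lra|].
  unfold ind at 2. destruct (Nat.eqb_spec (r (S M)) m) as [E|E].
  - rewrite (sum1_ext _ (fun _ => 0)).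
    + rewrite sum1_const. lra.
    + intros n Hn. unfold ind. destruct (Nat.eqb_spec (r n) m); [|lra].
      assert (n = S M) by (apply Hinj; lia). lia.
  - pose proof (IHM ltac:(intros; apply Hinj; lia)). lra.
Qed.

Lemma ind_nonneg a b : 0 <= ind a b.
Proof. unfold ind; destruct (Nat.eqb a b); lra. Qed.

Lemma count_sum (r : nat -> nat) (F : nat -> R) N M :
  (forall m, 0 <= F m) ->
  (forall n, (1 <= n <= M)%nat -> (1 <= r n <= N)%nat) ->
  (forall n1 n2, (1 <= n1 <= M)%nat -> (1 <= n2 <= M)%nat -> r n1 = r n2 -> n1 = n2) ->
  sum1 (fun n => F (r n)) M <= sum1 F N.
Proof.
  intros HF Hr Hinj.
  rewrite (sum1_ext _ (fun n => sum1 (fun m => ind (r n) m * F m) N)).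
  2:{ intros n Hn. rewrite sum_ind; auto. }
  rewrite sum1_exch. apply sum1_le. intros m Hm.
  rewrite (sum1_ext _ (fun n => F m * ind (r n) m)) by (intros; lra).
  rewrite sum1_scal. pose proof (count_le r M m Hinj). pose proof (HF m).
  assert (0 <= sum1 (fun n => ind (r n) m) M).
  { clear. induction M; simpl; [lra|]. pose proof (ind_nonneg (r (S M)) m). lra. }
  nra.
Qed.

Lemma sum_inv_sq0 N : sum1 (fun m => / (INR m) ^ 2) (S N) <= 2 - / INR (S N).
Proof.
  induction N.
  - simpl. lra.
  - change (sum1 (fun m => / (INR m) ^ 2) (S (S N))) with
      (sum1 (fun m => / (INR m) ^ 2) (S N) + / (INR (S (S N))) ^ 2).
    rewrite (S_INR (S N)).
    assert (Hn : 1 <= INR (S N)) by (apply (le_INR 1); lia).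
    set (t := INR (S N)) in *.
    assert (/ (t + 1) ^ 2 <= / t - / (t + 1)).
    { apply (Rmult_le_reg_r (t * (t+1)^2)). nra.
      field_simplify; try lra. }
    lra.
Qed.

Lemma sum_inv_sq N : sum1 (fun m => / (INR m) ^ 2) N <= 2.
Proof.
  destruct N. { simpl; lra. }
  pose proof (sum_inv_sq0 N). assert (0 < / INR (S N)).
  { apply Rinv_0_lt_compat, lt_0_INR; lia. } lra.
Qed.


Definition Pm (al : R) j := fst (snd (conv_pair al j)).
Definition Qm (al : R) j := snd (snd (conv_pair al j)).

Lemma conv_S al j :
  cf_p al (S j) = (cf_a al (S j) * cf_p al j + Pm al j)%Z /\
  cf_q al (S j) = (cf_a al (S j) * cf_q al j + Qm al j)%Z /\
  Pm al (S j) = cf_p al j /\ Qm al (S j) = cf_q al j.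
Proof.
  unfold cf_p, cf_q, Pm, Qm. simpl.
  destruct (conv_pair al j) as [[p q] [p' q']]. simpl. auto.
Qed.

Lemma conv_0 al : cf_p al 0 = cf_a al 0 /\ cf_q al 0 = 1%Z /\ Pm al 0 = 1%Z /\ Qm al 0 = 0%Z.
Proof. unfold cf_p, cf_q, Pm, Qm. simpl. auto. Qed.

Lemma floor_bounds r : IZR (floorZ r) <= r < IZR (floorZ r) + 1.
Proof. unfold floorZ. pose proof (base_Int_part r). lra. Qed.

Lemma cquot_S al j : cquot al (S j) = / (cquot al j - IZR (cf_a al j)).
Proof. reflexivity. Qed.

Lemma a_bounds al j : IZR (cf_a al j) <= cquot al j < IZR (cf_a al j) + 1.
Proof. apply floor_bounds. Qed.

Lemma cf_main al : irrational al -> forall j,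
  IZR (cf_a al j) < cquot al j /\
  al * (IZR (cf_q al j) * cquot al (S j) + IZR (Qm al j)) =
     IZR (cf_p al j) * cquot al (S j) + IZR (Pm al j) /\
  (1 <= cf_q al j)%Z /\ (0 <= Qm al j)%Z.
Proof.
  intros Hirr. induction j.
  - destruct (conv_0 al) as (E1 & E2 & E3 & E4). rewrite E1, E2, E3, E4.
    pose proof (a_bounds al 0) as [Hl Hu]. simpl cquot in *.
    assert (Hne : al <> IZR (cf_a al 0)).
    { intro E. apply (Hirr (cf_a al 0) 1%Z); [lia|]. unfold Rdiv. rewrite Rinv_1. lra. }
    change (floorZ al) with (cf_a al 0).
    repeat split; try lia; try lra.
    field. lra.
  - destruct IHj as (Hlt & Hid & Hq & Hqm).
    destruct (conv_S al j) as (E1 & E2 & E3 & E4). rewrite E1, E2, E3, E4.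
    pose proof (a_bounds al j) as [Hl Hu].
    set (y := cquot al (S j)) in *.
    assert (Hy : 1 < y).
    { unfold y; rewrite cquot_S.
      replace 1 with (/ 1) by lra. apply Rinv_lt_contravar; lra. }
    pose proof (a_bounds al (S j)) as [Hl' Hu']. fold y in Hl', Hu'.
    set (a' := cf_a al (S j)) in *.
    assert (Ha' : (1 <= a')%Z).
    { assert (0 < IZR a') by lra. apply lt_IZR in H. lia. }
    assert (Hq' : (1 <= a' * cf_q al j + Qm al j)%Z) by nia.
    assert (Hstrict : IZR a' < y).
    { destruct (Rle_lt_or_eq_dec _ _ Hl') as [h|h]; auto. exfalso.
      apply (Hirr (a' * cf_p al j + Pm al j)%Z (a' * cf_q al j + Qm al j)%Z); [lia|].
      rewrite <- h in Hid. rewrite !plus_IZR, !mult_IZR.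
      assert (IZR (a' * cf_q al j + Qm al j) <> 0) by (apply not_0_IZR; lia).
      rewrite plus_IZR, mult_IZR in H.
      field_simplify_eq; auto. lra. }
    repeat split; try lia; auto.
    rewrite cquot_S. fold y. fold a'.
    set (z := / (y - IZR a')).
    assert (Hyz : y * z = IZR a' * z + 1) by (unfold z; field; lra).
    rewrite !plus_IZR, !mult_IZR.
    set (Q := IZR (cf_q al j)) in *. set (P := IZR (cf_p al j)) in *.
    set (Qm' := IZR (Qm al j)) in *. set (Pm' := IZR (Pm al j)) in *.
    transitivity (z * (al * (Q * y + Qm')) + al * Q * (IZR a' * z + 1 - y * z)).
    + ring.
    + rewrite Hid.
      transitivity (P * (y * z) + Pm' * z + al * Q * (IZR a' * z + 1 - y * z)); [ring|].
      rewrite Hyz. ring.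
Qed.

Lemma pow_m1 j : (-1) ^ j = 1 \/ (-1) ^ j = -1.
Proof. induction j; simpl; [auto|]. destruct IHj as [-> | ->]; [right|left]; ring. Qed.

Definition Zdet al j := (cf_p al j * Qm al j - Pm al j * cf_q al j)%Z.

Lemma Zdet_val al j : IZR (Zdet al j) = - (-1) ^ j.
Proof.
  induction j.
  - unfold Zdet. destruct (conv_0 al) as (E1 & E2 & E3 & E4). rewrite E2, E3, E4.
    replace (cf_p al 0 * 0 - 1 * 1)%Z with (-1)%Z by ring. simpl. lra.
  - unfold Zdet in *. destruct (conv_S al j) as (E1 & E2 & E3 & E4). rewrite E1, E2, E3, E4.
    rewrite minus_IZR, !mult_IZR, !plus_IZR, !mult_IZR.
    rewrite minus_IZR, !mult_IZR in IHj. simpl pow. nra.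
Qed.

Lemma Zdet_unit al j : Zdet al j = 1%Z \/ Zdet al j = (-1)%Z.
Proof.
  pose proof (Zdet_val al j). destruct (pow_m1 j) as [E|E]; rewrite E in H.
  - right. apply eq_IZR. rewrite H, <- opp_IZR. reflexivity.
  - left. apply eq_IZR. rewrite H, <- opp_IZR. reflexivity.
Qed.

Definition den al j := IZR (cf_q al j) * cquot al (S j) + IZR (Qm al j).
Definition ee al j := / den al j.

Lemma cquot_gt1 al : irrational al -> forall j, 1 < cquot al (S j).
Proof.
  intros Hirr j. destruct (cf_main al Hirr j) as (Hlt & _).
  pose proof (a_bounds al j). rewrite cquot_S.
  replace 1 with (/ 1) by lra. apply Rinv_lt_contravar; lra.
Qed.

Lemma a_pos al : irrational al -> forall j, 1 <= IZR (cf_a al (S j)).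
Proof.
  intros Hirr j. pose proof (cquot_gt1 al Hirr j). pose proof (a_bounds al (S j)).
  assert (0 < IZR (cf_a al (S j))) by lra. apply lt_IZR in H1. apply IZR_le. lia.
Qed.

Lemma den_pos al : irrational al -> forall j, 1 < den al j.
Proof.
  intros Hirr j. unfold den. destruct (cf_main al Hirr j) as (_ & _ & Hq & Hqm).
  apply IZR_le in Hq. apply IZR_le in Hqm. pose proof (cquot_gt1 al Hirr j). nra.
Qed.

Lemma ee_pos al : irrational al -> forall j, 0 < ee al j.
Proof. intros. unfold ee. pose proof (den_pos al H j). apply Rinv_0_lt_compat. lra. Qed.

Lemma D_formula al : irrational al -> forall j,
  IZR (cf_q al j) * al - IZR (cf_p al j) = (-1) ^ j * ee al j.
Proof.
  intros Hirr j. destruct (cf_main al Hirr j) as (_ & Hid & _ & _).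
  pose proof (den_pos al Hirr j). pose proof (Zdet_val al j). unfold Zdet in H0.
  rewrite minus_IZR, !mult_IZR in H0. unfold ee. unfold den in *.
  apply (Rmult_eq_reg_r (IZR (cf_q al j) * cquot al (S j) + IZR (Qm al j))); [|lra].
  rewrite Rmult_assoc, Rinv_l by lra.
  transitivity (IZR (cf_q al j) * (al * (IZR (cf_q al j) * cquot al (S j) + IZR (Qm al j)))
     - IZR (cf_p al j) * (IZR (cf_q al j) * cquot al (S j) + IZR (Qm al j))); [ring|].
  rewrite Hid. nra.
Qed.

Lemma ee_lt al : irrational al -> forall j,
  ee al j < / (IZR (cf_a al (S j)) * IZR (cf_q al j)).
Proof.
  intros Hirr j. unfold ee. pose proof (den_pos al Hirr j).
  destruct (cf_main al Hirr (S j)) as (Hlt & _).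
  destruct (cf_main al Hirr j) as (_ & _ & Hq & Hqm).
  apply IZR_le in Hq. apply IZR_le in Hqm. pose proof (a_pos al Hirr j).
  apply Rinv_lt_contravar. { apply Rmult_lt_0_compat; [apply Rmult_lt_0_compat|]; lra. } unfold den. nra.
Qed.

Lemma Qm_pos al : irrational al -> forall j, (1 <= j)%nat -> (1 <= Qm al j)%Z.
Proof.
  intros Hirr j Hj. destruct j; [lia|]. destruct (conv_S al j) as (_ & _ & _ & E).
  rewrite E. apply (cf_main al Hirr j).
Qed.

Lemma ee_half al : irrational al -> forall j, (1 <= j)%nat -> ee al j < / 2.
Proof.
  intros Hirr j Hj. unfold ee. pose proof (den_pos al Hirr j).
  pose proof (Qm_pos al Hirr j Hj). apply IZR_le in H0.
  destruct (cf_main al Hirr j) as (_ & _ & Hq & _). apply IZR_le in Hq.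
  pose proof (cquot_gt1 al Hirr j).
  apply Rinv_lt_contravar. lra. unfold den. nra.
Qed.

Lemma ee_rec al : irrational al -> forall j,
  ee al j = IZR (cf_a al (S (S j))) * ee al (S j) + ee al (S (S j)).
Proof.
  intros Hirr j.
  pose proof (D_formula al Hirr j) as D0.
  pose proof (D_formula al Hirr (S j)) as D1.
  pose proof (D_formula al Hirr (S (S j))) as D2.
  destruct (conv_S al (S j)) as (E1 & E2 & _ & _).
  destruct (conv_S al j) as (_ & _ & E3 & E4).
  rewrite E1, E2, E3, E4 in D2.
  rewrite !plus_IZR, !mult_IZR in D2. simpl pow in *.
  destruct (pow_m1 j) as [E|E]; rewrite E in *; nra.
Qed.

Lemma qe_prev al : irrational al -> forall j, IZR (cf_q al (S j)) * ee al j <= 1.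
Proof.
  intros Hirr j. pose proof (den_pos al Hirr j). unfold ee.
  destruct (conv_S al j) as (_ & E2 & _ & _). rewrite E2.
  rewrite plus_IZR, mult_IZR.
  destruct (cf_main al Hirr j) as (_ & _ & Hq & _). apply IZR_le in Hq.
  pose proof (a_bounds al (S j)).
  apply (Rmult_le_reg_r (den al j)); [lra|]. rewrite Rmult_assoc, Rinv_l by lra.
  unfold den. nra.
Qed.

Lemma dist_ee al : irrational al -> forall j, (1 <= j)%nat ->
  dist_int (IZR (cf_q al j) * al) = ee al j.
Proof.
  intros Hirr j Hj. pose proof (D_formula al Hirr j).
  pose proof (ee_half al Hirr j Hj). pose proof (ee_pos al Hirr j).
  unfold dist_int, floorZ.
  destruct (pow_m1 j) as [E|E]; rewrite E in H.
  - rewrite <- (Int_part_spec _ (cf_p al j)) by lra.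
    unfold Rmin; destruct (Rle_dec _ _); lra.
  - rewrite <- (Int_part_spec _ (cf_p al j - 1)) by (rewrite minus_IZR; lra).
    rewrite minus_IZR. unfold Rmin; destruct (Rle_dec _ _); lra.
Qed.


Lemma per_term_core q m x s :
  1 <= m -> m <= q - 1 -> -1 < x -> 0 <= s -> x + s < 1 ->
  let v := PI * (m + x) / q in let h := PI * s / q in
  0 < sin v /\ 0 < sin (v + h) /\
  1 - s / (1 - x) <= sin (v + h) / sin v /\
  sin (v + h) / sin v = cos h + sin h * cot v.
Proof.
  intros Hm Hmq Hx Hs Hxs v h. pose proof PI_RGT_0 as Hpi.
  assert (Hq : 0 < q) by lra.
  set (Y := m + x).
  assert (HY : 0 < Y < q) by (unfold Y; lra).
  assert (HYs : Y + s < q) by (unfold Y; lra).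
  assert (Hvh : v + h = PI * (Y + s) / q) by (unfold v, h, Y; field; lra).
  assert (Hv0 : 0 < v < PI).
  { unfold v. fold Y. split.
    - apply Rdiv_lt_0_compat; nra.
    - apply (Rmult_lt_reg_r q); [lra|]. unfold Rdiv. rewrite Rmult_assoc, Rinv_l by lra. nra. }
  assert (Hv1 : 0 < v + h < PI).
  { rewrite Hvh. split.
    - apply Rdiv_lt_0_compat; nra.
    - apply (Rmult_lt_reg_r q); [lra|]. unfold Rdiv. rewrite Rmult_assoc, Rinv_l by lra. nra. }
  pose proof (sin_gt_0 _ (proj1 Hv0) (proj2 Hv0)) as S0.
  pose proof (sin_gt_0 _ (proj1 Hv1) (proj2 Hv1)) as S1.
  split; [auto|]. split; [auto|]. split.
  - set (A := PI * (q - Y - s) / q). set (Bv := PI * (q - Y) / q).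
    assert (EA : sin A = sin (v + h)).
    { rewrite <- sin_PI_x. f_equal. unfold A. rewrite Hvh. field. lra. }
    assert (EB : sin Bv = sin v).
    { rewrite <- sin_PI_x. f_equal. unfold Bv, v. fold Y. field. lra. }
    assert (HA : 0 < A).
    { unfold A. apply Rdiv_lt_0_compat; [|lra]. apply Rmult_lt_0_compat; lra. }
    assert (HAB : A <= Bv).
    { unfold A, Bv. unfold Rdiv. apply Rmult_le_compat_r. left; apply Rinv_0_lt_compat; lra. nra. }
    assert (HB : Bv <= PI).
    { unfold Bv. apply (Rmult_le_reg_r q); [lra|]. unfold Rdiv. rewrite Rmult_assoc, Rinv_l by lra. nra. }
    pose proof (sin_ratio A Bv HA HAB HB) as R. rewrite EA, EB in R.
    assert (HBp : 0 < Bv) by lra.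
    assert (sin (v + h) / sin v >= A / Bv).
    { apply Rle_ge. unfold Rdiv. apply (Rmult_le_reg_r (sin v * Bv)). nra.
      replace (A * / Bv * (sin v * Bv)) with (A * sin v) by (field; lra).
      replace (sin (v + h) * / sin v * (sin v * Bv)) with (Bv * sin (v + h)) by (field; lra).
      lra. }
    assert (A / Bv = 1 - s / (q - Y)) by (unfold A, Bv; field; split; lra).
    assert (s / (q - Y) <= s / (1 - x)).
    { unfold Rdiv. apply Rmult_le_compat_l; auto. apply Rinv_le_contravar; unfold Y; lra. }
    lra.
  - rewrite sin_plus. unfold cot. field. lra.
Qed.

Lemma inv_sq_le L S : 0 < L -> L <= S -> / S ^ 2 <= / L ^ 2.
Proof. intros. apply Rinv_le_contravar. nra. nra. Qed.

Lemma inv_sin_sq q m x :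
  1 <= m -> m <= q - 1 -> -1 < x -> x < 1 ->
  / (sin (PI * (m + x) / q)) ^ 2 <=
    q ^ 2 / (4 * (1 - Rabs x) ^ 2) * (/ m ^ 2 + / (q - m) ^ 2).
Proof.
  intros Hm Hmq Hx1 Hx2. pose proof PI_RGT_0 as Hpi.
  assert (Hq : 0 < q) by lra.
  assert (Hax : 0 < 1 - Rabs x) by (unfold Rabs; destruct (Rcase_abs x); lra).
  assert (Hax2 : - Rabs x <= x <= Rabs x) by (unfold Rabs; destruct (Rcase_abs x); lra).
  set (Y := m + x).
  assert (Pm : 0 < / m ^ 2) by (apply Rinv_0_lt_compat; nra).
  assert (Pqm : 0 < / (q - m) ^ 2) by (apply Rinv_0_lt_compat; nra).
  assert (Hk : 0 < q ^ 2 / (4 * (1 - Rabs x) ^ 2)).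
  { apply Rdiv_lt_0_compat; nra. }
  destruct (Rle_lt_dec Y (q / 2)) as [HY|HY].
  - assert (Hv : 0 <= PI * Y / q <= PI / 2).
    { split. apply Rmult_le_pos; [|left; apply Rinv_0_lt_compat; lra]. unfold Y; nra.
      apply (Rmult_le_reg_r q); [lra|]. unfold Rdiv. rewrite Rmult_assoc, Rinv_l by lra. nra. }
    pose proof (jordan _ Hv) as J.
    assert (E : 2 * (PI * Y / q) / PI = 2 * Y / q) by (field; lra).
    rewrite E in J.
    assert (L1 : 2 * (m * (1 - Rabs x)) / q <= 2 * Y / q).
    { unfold Rdiv. apply Rmult_le_compat_r; [left; apply Rinv_0_lt_compat; lra|]. unfold Y. nra. }
    assert (L0 : 0 < 2 * (m * (1 - Rabs x)) / q).
    { apply Rdiv_lt_0_compat; nra. }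
    pose proof (inv_sq_le _ _ L0 (Rle_trans _ _ _ L1 J)).
    replace (/ (2 * (m * (1 - Rabs x)) / q) ^ 2) with (q ^ 2 / (4 * (1 - Rabs x) ^ 2) * / m ^ 2) in H
      by (field; split; lra).
    fold Y. nra.
  - assert (Hv : 0 <= PI * (q - Y) / q <= PI / 2).
    { split. apply Rmult_le_pos; [|left; apply Rinv_0_lt_compat; lra]. unfold Y; nra.
      apply (Rmult_le_reg_r q); [lra|]. unfold Rdiv. rewrite Rmult_assoc, Rinv_l by lra. nra. }
    pose proof (jordan _ Hv) as J.
    assert (E : 2 * (PI * (q - Y) / q) / PI = 2 * (q - Y) / q) by (field; lra).
    rewrite E in J.
    assert (ES : sin (PI * (q - Y) / q) = sin (PI * Y / q)).
    { rewrite <- sin_PI_x. f_equal. field. lra. }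
    rewrite ES in J.
    assert (L1 : 2 * ((q - m) * (1 - Rabs x)) / q <= 2 * (q - Y) / q).
    { unfold Rdiv. apply Rmult_le_compat_r; [left; apply Rinv_0_lt_compat; lra|]. unfold Y. nra. }
    assert (L0 : 0 < 2 * ((q - m) * (1 - Rabs x)) / q).
    { apply Rdiv_lt_0_compat; nra. }
    pose proof (inv_sq_le _ _ L0 (Rle_trans _ _ _ L1 J)).
    replace (/ (2 * ((q - m) * (1 - Rabs x)) / q) ^ 2) with
       (q ^ 2 / (4 * (1 - Rabs x) ^ 2) * / (q - m) ^ 2) in H by (field; split; lra).
    fold Y. nra.
Qed.

Lemma ln4_gt1 : 1 < ln 4.
Proof.
  rewrite <- ln_exp at 1. apply ln_increasing. apply exp_pos.
  pose proof exp_le_3. lra.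
Qed.

Lemma f_lower w c h u :
  0 < c -> c < 1 -> c <= w -> w = cos h + u -> 0 <= h ->
  - 4 * ln (4 / c) * (w - 1) ^ 2 - h ^ 2 / 2 <= ln w - u.
Proof.
  intros Hc Hc1 Hcw Hw Hh.
  assert (HL : ln 4 <= ln (4 / c)).
  { destruct (Req_dec c 1); [lra|]. apply Rlt_le, ln_increasing; [lra|].
    apply (Rmult_lt_reg_r c); [lra|]. unfold Rdiv. rewrite Rmult_assoc, Rinv_l by lra. lra. }
  pose proof ln4_gt1.
  pose proof (one_minus_cos h Hh).
  assert (ln w - (w - 1) >= - 4 * ln (4 / c) * (w - 1) ^ 2).
  { destruct (Rle_lt_dec (/2) w) as [H1|H1].
    - pose proof (ln_ge_inv w ltac:(lra)).
      assert (1 - / w >= (w - 1) - 2 * (w - 1) ^ 2).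
      { apply Rle_ge. apply (Rmult_le_reg_r w); [lra|].
        replace ((1 - / w) * w) with (w - 1) by (field; lra). pose proof (Rmult_le_pos ((w-1)^2) (2*w - 1) (pow2_ge_0 _) ltac:(lra)). nra. }
      pose proof (Rmult_le_pos ((w-1)^2) (4 * ln (4 / c) - 2) (pow2_ge_0 _) ltac:(lra)). nra.
    - assert (ln c <= ln w) by (destruct (Req_dec c w); [subst; lra|]; apply Rlt_le, ln_increasing; lra).
      assert (ln (4 / c) = ln 4 - ln c).
      { unfold Rdiv. rewrite ln_mult, ln_Rinv; try lra. apply Rinv_0_lt_compat; lra. }
      assert (1 <= 4 * (w-1)^2) by nra.
      pose proof (Rmult_le_pos (ln (4 / c)) (4 * (w-1)^2 - 1) ltac:(lra) ltac:(lra)). nra. }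
  lra.
Qed.

Lemma w1_sq w h u : w = cos h + u -> 0 <= h -> (w - 1) ^ 2 <= h ^ 4 / 2 + 2 * u ^ 2.
Proof.
  intros Hw Hh. pose proof (one_minus_cos h Hh). pose proof (COS_bound h).
  subst. assert (Ht : 0 <= 1 - cos h <= h ^ 2 / 2) by lra.
  replace (cos h + u - 1) with (u - (1 - cos h)) by ring.
  revert Ht. generalize (1 - cos h) as t. intros t Ht.
  assert (t ^ 2 <= (h ^ 2 / 2) ^ 2).
  { apply pow_incr. lra. }
  pose proof (pow2_ge_0 (u + t)).
  replace (h ^ 4 / 2) with (2 * (h ^ 2 / 2) ^ 2) by field. nra.
Qed.

Lemma u_sq h v : 0 <= h <= PI -> sin v <> 0 -> (sin h * cot v) ^ 2 <= h ^ 2 / (sin v) ^ 2.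
Proof.
  intros Hh Hv. unfold cot.
  pose proof (sin_le_id h (proj1 Hh)).
  assert (0 <= sin h).
  { destruct (Req_dec h 0) as [->|]. rewrite sin_0; lra.
    destruct (Req_dec h PI) as [->|]. rewrite sin_PI; lra.
    left; apply sin_gt_0; lra. }
  pose proof (COS_bound v).
  replace ((sin h * (cos v / sin v)) ^ 2) with ((sin h) ^ 2 * (cos v) ^ 2 / (sin v) ^ 2)
    by (field; auto).
  unfold Rdiv. apply Rmult_le_compat_r.
  - left. apply Rinv_0_lt_compat. simpl. rewrite Rmult_1_r.
    destruct (Rlt_dec 0 (sin v)); [nra|]. assert (sin v < 0) by lra. nra.
  - assert (sin h ^ 2 <= h ^ 2) by (apply pow_incr; lra).
    assert (cos v ^ 2 <= 1) by (simpl; nra).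
    pose proof (pow2_ge_0 (sin h)).
    pose proof (Rmult_le_compat _ _ _ _ H4 (pow2_ge_0 (cos v)) H2 H3). lra.
Qed.


Lemma sgnZ k : exists sZ : Z, IZR sZ = (-1) ^ k /\ (sZ = 1 \/ sZ = -1)%Z.
Proof.
  induction k. { exists 1%Z. simpl. auto. }
  destruct IHk as [s [Hs Hs']]. exists (- s)%Z. rewrite opp_IZR, Hs. simpl. split; [ring|lia].
Qed.

Lemma div_zero (Q n P Qm' Pm' : Z) :
  (P * Qm' - Pm' * Q = 1 \/ P * Qm' - Pm' * Q = -1)%Z ->
  (Q | n * P)%Z -> (- Q < n < Q)%Z -> n = 0%Z.
Proof.
  intros Hd [c Hc] Hn.
  assert (E1 : (n * (P * Qm' - Pm' * Q) = Q * (c * Qm' - n * Pm'))%Z).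
  { replace (n * (P * Qm' - Pm' * Q))%Z with (n * P * Qm' - n * Pm' * Q)%Z by ring.
    rewrite Hc. ring. }
  set (e := (c * Qm' - n * Pm')%Z) in E1.
  assert (HQ : (0 < Q)%Z) by lia.
  assert (Hn' : n = (Q * e)%Z \/ n = (- (Q * e))%Z) by (destruct Hd as [Hd|Hd]; rewrite Hd in E1; lia).
  destruct (Z.lt_trichotomy e 0) as [He|[He|He]].
  - assert (Q * e <= - Q)%Z by nia. lia.
  - subst e. rewrite He in Hn'. lia.
  - assert (Q <= Q * e)%Z by nia. lia.
Qed.

Lemma sin_shift y t : sin (y + IZR t * PI) = cos (IZR t * PI) * sin y.
Proof.
  rewrite sin_plus. rewrite (sin_eq_0_1 (IZR t * PI)) by (exists t; auto). ring.
Qed.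

Lemma cos_shift y t : cos (y + IZR t * PI) = cos (IZR t * PI) * cos y.
Proof.
  rewrite cos_plus. rewrite (sin_eq_0_1 (IZR t * PI)) by (exists t; auto). ring.
Qed.

Lemma cos_tpi_abs t : Rabs (cos (IZR t * PI)) = 1.
Proof.
  pose proof (sin2_cos2 (IZR t * PI)).
  rewrite (sin_eq_0_1 (IZR t * PI)) in H by (exists t; auto).
  unfold Rsqr in H. pose proof (Rabs_pos (cos (IZR t * PI))).
  assert (Rabs (cos (IZR t * PI)) * Rabs (cos (IZR t * PI)) = 1).
  { rewrite <- Rabs_mult. rewrite Rabs_right; lra. }
  nra.
Qed.

Lemma per_n al p q d s x (nr : R) (z t m : Z) :
  (s = 1 \/ s = -1) -> 0 < q -> q * al - p = s * d ->
  IZR z = nr * s * p -> IZR z = q * IZR t + IZR m ->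
  0 < sin (PI * (IZR m + x) / q) ->
  0 < sin (PI * (IZR m + x) / q + PI * (nr * d) / q) ->
  Rabs (2 * sin (PI * (nr * al + s * x / q))) =
    sin (PI * (IZR m + x) / q + PI * (nr * d) / q) / sin (PI * (IZR m + x) / q)
    * Rabs (2 * sin (PI * (nr * (p / q) + s * x / q))) /\
  0 < Rabs (2 * sin (PI * (nr * (p / q) + s * x / q))) /\
  cot (PI * (nr * s * p + x) / q) = cot (PI * (IZR m + x) / q).
Proof.
  intros Hs Hq Hd Hz Hzm S0 S1.
  set (v := PI * (IZR m + x) / q) in *.
  set (h := PI * (nr * d) / q) in *.
  assert (Th : PI * (nr * s * p + x) / q = v + IZR t * PI).
  { unfold v. rewrite <- Hz, Hzm. field. lra. }
  assert (Ea : PI * (nr * al + s * x / q) = s * (v + h + IZR t * PI)).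
  { unfold v, h. replace al with ((p + s * d) / q) by (field_simplify_eq; lra).
    destruct Hs as [-> | ->].
    - replace (IZR m) with (IZR z - q * IZR t) by lra. rewrite Hz. field. lra.
    - replace (IZR m) with (IZR z - q * IZR t) by lra. rewrite Hz. field. lra. }
  assert (Eb : PI * (nr * (p / q) + s * x / q) = s * (v + IZR t * PI)).
  { unfold v.
    destruct Hs as [-> | ->].
    - replace (IZR m) with (IZR z - q * IZR t) by lra. rewrite Hz. field. lra.
    - replace (IZR m) with (IZR z - q * IZR t) by lra. rewrite Hz. field. lra. }
  assert (Habs : forall y, Rabs (2 * sin (s * y)) = 2 * Rabs (sin y)).
  { intro y. rewrite Rabs_mult, (Rabs_right 2) by lra.
    destruct Hs as [-> | ->].
    - rewrite Rmult_1_l. auto.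
    - replace (-1 * y) with (- y) by ring. rewrite sin_neg, Rabs_Ropp. auto. }
  rewrite Ea, Eb, !Habs.
  replace (v + h + IZR t * PI) with ((v + h) + IZR t * PI) by ring.
  rewrite !sin_shift, !Rabs_mult, cos_tpi_abs, !Rmult_1_l.
  rewrite (Rabs_right (sin (v + h))) by lra. rewrite (Rabs_right (sin v)) by lra.
  split; [field; lra|]. split; [lra|].
  rewrite Th. unfold cot. rewrite sin_shift, cos_shift.
  assert (cos (IZR t * PI) <> 0).
  { intro E. pose proof (cos_tpi_abs t). rewrite E, Rabs_R0 in H. lra. }
  field. lra.
Qed.

Lemma residue_props al k sZ : irrational al -> (sZ = 1 \/ sZ = -1)%Z ->
  let Q := cf_q al k in
  (forall n : nat, (1 <= n)%nat -> (Z.of_nat n < Q)%Z ->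
     (1 <= (sZ * Z.of_nat n * cf_p al k) mod Q <= Q - 1)%Z) /\
  (forall n1 n2 : nat, (1 <= n1)%nat -> (Z.of_nat n1 < Q)%Z -> (1 <= n2)%nat -> (Z.of_nat n2 < Q)%Z ->
     ((sZ * Z.of_nat n1 * cf_p al k) mod Q = (sZ * Z.of_nat n2 * cf_p al k) mod Q)%Z -> n1 = n2).
Proof.
  intros Hirr Hs Q.
  destruct (cf_main al Hirr k) as (_ & _ & HQ & _). fold Q in HQ.
  pose proof (Zdet_unit al k) as Hd. unfold Zdet in Hd. fold Q in Hd.
  split.
  - intros n Hn HnQ.
    pose proof (Z.mod_pos_bound (sZ * Z.of_nat n * cf_p al k) Q ltac:(lia)).
    destruct (Z.eq_dec ((sZ * Z.of_nat n * cf_p al k) mod Q) 0) as [E|E]; [|lia].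
    exfalso. apply Z.mod_divide in E; [|lia].
    assert (Hdv : (Q | Z.of_nat n * cf_p al k)%Z).
    { destruct E as [c Hc]. exists (sZ * c)%Z.
      destruct Hs as [-> | ->]; lia. }
    pose proof (div_zero Q (Z.of_nat n) (cf_p al k) (Qm al k) (Pm al k) Hd Hdv ltac:(lia)).
    lia.
  - intros n1 n2 H1 H1' H2 H2' E.
    pose proof (Z.div_mod (sZ * Z.of_nat n1 * cf_p al k) Q ltac:(lia)) as D1.
    pose proof (Z.div_mod (sZ * Z.of_nat n2 * cf_p al k) Q ltac:(lia)) as D2.
    assert (Hdv : (Q | (Z.of_nat n1 - Z.of_nat n2) * cf_p al k)%Z).
    { exists (sZ * ((sZ * Z.of_nat n1 * cf_p al k) / Q - (sZ * Z.of_nat n2 * cf_p al k) / Q))%Z.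
      destruct Hs as [-> | ->]; lia. }
    pose proof (div_zero Q _ (cf_p al k) (Qm al k) (Pm al k) Hd Hdv ltac:(lia)).
    lia.
Qed.

Lemma Bsum_eq al k M x : Bsum al k M x = sum1 (fun n =>
  sin (PI * INR n * dist_int (IZR (cf_q al k) * al) / IZR (cf_q al k)) *
  cot (PI * (INR n * (-1) ^ k * IZR (cf_p al k) + x) / IZR (cf_q al k))) M.
Proof. induction M; simpl Bsum; simpl sum1; [auto|]. rewrite IHM. auto. Qed.

Lemma Pprod_ratio M b1 b2 X (w : nat -> R) :
  (forall n, (1 <= n <= M)%nat -> 0 < w n /\ 0 < Rabs (2 * sin (PI * (INR n * b2 + X))) /\
     Rabs (2 * sin (PI * (INR n * b1 + X))) = w n * Rabs (2 * sin (PI * (INR n * b2 + X)))) ->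
  0 < Pprod M b2 X /\ 0 < Pprod M b1 X / Pprod M b2 X /\
  ln (Pprod M b1 X / Pprod M b2 X) = sum1 (fun n => ln (w n)) M.
Proof.
  induction M; intros H.
  - simpl. split; [lra|]. rewrite Rdiv_1_r. split; [lra|]. apply ln_1.
  - destruct IHM as (P1 & P2 & P3). { intros; apply H; lia. }
    destruct (H (S M) ltac:(lia)) as (W1 & W2 & W3).
    cbn [Pprod sum1]. rewrite W3.
    replace (Pprod M b1 X * (w (S M) * Rabs (2 * sin (PI * (INR (S M) * b2 + X)))) /
       (Pprod M b2 X * Rabs (2 * sin (PI * (INR (S M) * b2 + X)))))
      with (Pprod M b1 X / Pprod M b2 X * w (S M)) by (field; lra).
    split; [nra|]. split; [nra|]. rewrite ln_mult by lra. rewrite P3. auto.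
Qed.

Lemma sum1_minus f g N : sum1 (fun m => f m - g m) N = sum1 f N - sum1 g N.
Proof. induction N; simpl; [lra|]. rewrite IHN. lra. Qed.

Lemma B_decomp al k M x : irrational al -> (1 <= k)%nat ->
  INR M < IZR (cf_q al k) -> -1 < x -> x + INR M * ee al k < 1 ->
  exists r : nat -> nat,
    (forall n, (1 <= n <= M)%nat -> (1 <= r n <= Z.to_nat (cf_q al k) - 1)%nat) /\
    (forall n1 n2, (1 <= n1 <= M)%nat -> (1 <= n2 <= M)%nat -> r n1 = r n2 -> n1 = n2) /\
    B al k M x = sum1 (fun n =>
       ln (sin (PI * (INR (r n) + x) / IZR (cf_q al k) + PI * (INR n * ee al k) / IZR (cf_q al k))
           / sin (PI * (INR (r n) + x) / IZR (cf_q al k)))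
       - sin (PI * (INR n * ee al k) / IZR (cf_q al k)) * cot (PI * (INR (r n) + x) / IZR (cf_q al k))) M.
Proof.
  intros Hirr Hk HM Hx HxM.
  destruct (sgnZ k) as [sZ [HsZ Hs]].
  destruct (residue_props al k sZ Hirr Hs) as [Hres Hinj].
  set (Q := cf_q al k) in *.
  destruct (cf_main al Hirr k) as (_ & _ & HQ & _). fold Q in HQ.
  set (z := fun n : nat => (sZ * Z.of_nat n * cf_p al k)%Z).
  exists (fun n => Z.to_nat (z n mod Q)).
  assert (HnQ : forall n, (n <= M)%nat -> (Z.of_nat n < Q)%Z).
  { intros n Hn. apply lt_IZR. rewrite <- INR_IZR_INZ. apply le_INR in Hn. lra. }
  assert (Hr : forall n, (1 <= n <= M)%nat -> INR (Z.to_nat (z n mod Q)) = IZR (z n mod Q)).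
  { intros n Hn. rewrite INR_IZR_INZ, Z2Nat.id; auto. pose proof (Hres n ltac:(lia) (HnQ n ltac:(lia))). unfold z. lia. }
  split; [|split].
  - intros n Hn. pose proof (Hres n ltac:(lia) (HnQ n ltac:(lia))). unfold z. lia.
  - intros n1 n2 H1 H2 E. apply (Hinj n1 n2); try lia; try apply HnQ; try lia.
    pose proof (Hres n1 ltac:(lia) (HnQ n1 ltac:(lia))). pose proof (Hres n2 ltac:(lia) (HnQ n2 ltac:(lia))).
    unfold z in E. lia.
  - pose proof (ee_pos al Hirr k) as Hd.
    pose proof (D_formula al Hirr k) as HD. rewrite <- HsZ in HD.
    assert (Hq : 1 <= IZR Q) by (apply IZR_le; lia).
    assert (Hsr : IZR sZ = 1 \/ IZR sZ = -1) by (destruct Hs as [-> | ->]; auto).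
    assert (PN : forall n, (1 <= n <= M)%nat ->
      let v := PI * (INR (Z.to_nat (z n mod Q)) + x) / IZR Q in
      let h := PI * (INR n * ee al k) / IZR Q in
      0 < sin (v + h) / sin v /\
      Rabs (2 * sin (PI * (INR n * al + (-1) ^ k * x / IZR Q))) =
        sin (v + h) / sin v * Rabs (2 * sin (PI * (INR n * (IZR (cf_p al k) / IZR Q) + (-1) ^ k * x / IZR Q))) /\
      0 < Rabs (2 * sin (PI * (INR n * (IZR (cf_p al k) / IZR Q) + (-1) ^ k * x / IZR Q))) /\
      sin (PI * INR n * dist_int (IZR Q * al) / IZR Q) *
        cot (PI * (INR n * (-1) ^ k * IZR (cf_p al k) + x) / IZR Q) = sin h * cot v).
    { intros n Hn v h.
      pose proof (Hres n ltac:(lia) (HnQ n ltac:(lia))) as Hm.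
      assert (HnM : INR n <= INR M) by (apply le_INR; lia).
      assert (Hn0 : 0 <= INR n) by apply pos_INR.
      assert (Hm1 : 1 <= IZR (z n mod Q)) by (apply IZR_le; unfold z; lia).
      assert (Hm2 : IZR (z n mod Q) <= IZR Q - 1) by (rewrite <- minus_IZR; apply IZR_le; unfold z; lia).
      pose proof (per_term_core (IZR Q) (IZR (z n mod Q)) x (INR n * ee al k) Hm1 Hm2 Hx
         ltac:(nra) ltac:(nra)) as (C1 & C2 & C3 & C4).
      unfold v, h. rewrite (Hr n Hn).
      pose proof (Z.div_mod (z n) Q ltac:(lia)) as Hdm.
      assert (HzR : IZR (z n) = IZR Q * IZR (z n / Q) + IZR (z n mod Q)).
      { rewrite Hdm at 1. rewrite plus_IZR, mult_IZR. auto. }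
      assert (Hz : IZR (z n) = INR n * (-1) ^ k * IZR (cf_p al k)).
      { unfold z. rewrite !mult_IZR, <- INR_IZR_INZ, HsZ. ring. }
      rewrite <- HsZ in Hz |- *.
      destruct (per_n al (IZR (cf_p al k)) (IZR Q) (ee al k) (IZR sZ) x (INR n) (z n) (z n / Q) (z n mod Q)
        Hsr ltac:(lra) HD Hz HzR C1 C2) as (E1 & E2 & E3).
      split; [apply Rdiv_lt_0_compat; lra|]. split; [exact E1|]. split; [exact E2|].
      rewrite E3. change (IZR Q * al) with (IZR (cf_q al k) * al). rewrite dist_ee by auto. fold Q. f_equal. f_equal. field. lra. }
    unfold B. fold Q.
    destruct (Pprod_ratio M al (IZR (cf_p al k) / IZR Q) ((-1) ^ k * x / IZR Q)
      (fun n => sin (PI * (INR (Z.to_nat (z n mod Q)) + x) / IZR Q + PI * (INR n * ee al k) / IZR Q) /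
                sin (PI * (INR (Z.to_nat (z n mod Q)) + x) / IZR Q))) as (_ & _ & L).
    { intros n Hn. destruct (PN n Hn) as (A1 & A2 & A3 & A4). auto. }
    rewrite L, Bsum_eq. fold Q. rewrite sum1_minus. f_equal.
    apply sum1_ext. intros n Hn. destruct (PN n Hn) as (A1 & A2 & A3 & A4). exact A4.
Qed.


Lemma INR_toQ al k : irrational al -> INR (Z.to_nat (cf_q al k)) = IZR (cf_q al k).
Proof.
  intros Hirr. destruct (cf_main al Hirr k) as (_ & _ & HQ & _).
  rewrite INR_IZR_INZ, Z2Nat.id; auto; lia.
Qed.

Lemma r_bounds al k (r : nat -> nat) n : irrational al ->
  (1 <= r n <= Z.to_nat (cf_q al k) - 1)%nat ->
  1 <= INR (r n) /\ INR (r n) <= IZR (cf_q al k) - 1.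
Proof.
  intros Hirr H. destruct (cf_main al Hirr k) as (_ & _ & HQ & _).
  split. apply (le_INR 1); lia.
  rewrite <- INR_toQ by auto. replace (INR (Z.to_nat (cf_q al k))) with (INR (Z.to_nat (cf_q al k) - 1) + 1).
  - assert (INR (r n) <= INR (Z.to_nat (cf_q al k) - 1)) by (apply le_INR; lia). lra.
  - rewrite minus_INR by lia. simpl. ring.
Qed.

Lemma B_nonpos al k M x : irrational al -> (1 <= k)%nat ->
  INR M < IZR (cf_q al k) -> -1 < x -> x + INR M * ee al k < 1 -> B al k M x <= 0.
Proof.
  intros Hirr Hk HM Hx HxM.
  destruct (B_decomp al k M x Hirr Hk HM Hx HxM) as (r & Hr & Hinj & ->).
  pose proof (ee_pos al Hirr k).
  rewrite <- (Rmult_0_r (INR M)), <- sum1_const.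
  apply sum1_le. intros n Hn.
  destruct (r_bounds al k r n Hirr (Hr n Hn)) as [Hm1 Hm2].
  assert (INR n <= INR M) by (apply le_INR; lia). pose proof (pos_INR n).
  destruct (per_term_core (IZR (cf_q al k)) (INR (r n)) x (INR n * ee al k) Hm1 Hm2 Hx
     ltac:(nra) ltac:(nra)) as (C1 & C2 & C3 & C4).
  set (w := sin _ / sin _) in *.
  assert (0 < w) by (apply Rdiv_lt_0_compat; auto).
  pose proof (ln_le_m1 w H2). rewrite C4 in H3 at 2.
  pose proof (COS_bound (PI * (INR n * ee al k) / IZR (cf_q al k))). lra.
Qed.

Lemma L_ge1 c : 0 < c -> c < 1 -> 1 < ln (4 / c).
Proof.
  intros. pose proof ln4_gt1.
  assert (ln 4 < ln (4 / c)).
  { apply ln_increasing; [lra|].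
    apply (Rmult_lt_reg_r c); [lra|]. unfold Rdiv. rewrite Rmult_assoc, Rinv_l by lra. lra. }
  lra.
Qed.

Lemma term_lower q m x s c a :
  1 <= m -> m <= q - 1 -> -1 < x -> 0 <= s -> s / (1 - x) <= 1 - c -> x < 1 ->
  0 < c -> c < 1 -> 1 <= a -> 1 <= q -> s <= / a ->
  let v := PI * (m + x) / q in let h := PI * s / q in
  let eta := PI / (a * q) in
  let K := q ^ 2 / (4 * (1 - Rabs x) ^ 2) in
  let G := / m ^ 2 + / (q - m) ^ 2 in
  - ln (4 / c) * (33 * eta ^ 2 + 8 * eta ^ 2 * K * G) <= ln (sin (v + h) / sin v) - sin h * cot v.
Proof.
  intros Hm1 Hm2 Hx Hs Hsc Hx1 Hc Hc1 Ha Hq Hsa v h eta K G.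
  pose proof PI_RGT_0 as Hpi. pose proof PI_4 as Hpi4.
  assert (Hxs : x + s < 1).
  { assert (s <= (1 - c) * (1 - x)).
    { apply (Rmult_le_reg_r (/ (1 - x))). apply Rinv_0_lt_compat; lra.
      rewrite Rmult_assoc, Rinv_r by lra. lra. }
    nra. }
  destruct (per_term_core q m x s Hm1 Hm2 Hx Hs Hxs) as (C1 & C2 & C3 & C4).
  fold v h in C1, C2, C3, C4.
  set (w := sin (v + h) / sin v) in *.
  set (u := sin h * cot v) in *.
  set (L := ln (4 / c)).
  pose proof (L_ge1 c Hc Hc1) as HL. fold L in HL.
  assert (Hh0 : 0 <= h).
  { unfold h. apply Rmult_le_pos; [|left; apply Rinv_0_lt_compat; lra]. nra. }
  assert (Hheta : h <= eta).
  { unfold h, eta. unfold Rdiv. rewrite Rinv_mult, <- Rmult_assoc.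
    apply Rmult_le_compat_r; [left; apply Rinv_0_lt_compat; lra|].
    apply Rmult_le_compat_l; lra. }
  assert (Heta : eta <= PI).
  { unfold eta. unfold Rdiv. rewrite <- (Rmult_1_r PI) at 2. apply Rmult_le_compat_l; [lra|].
    replace 1 with (/ 1) by lra. apply Rinv_le_contravar; nra. }
  assert (Hw : c <= w) by lra.
  pose proof (f_lower w c h u Hc Hc1 Hw C4 Hh0) as F. fold L in F.
  pose proof (w1_sq w h u C4 Hh0) as A1.
  pose proof (u_sq h v ltac:(lra) ltac:(lra)) as U. fold u in U.
  pose proof (inv_sin_sq q m x Hm1 Hm2 Hx Hx1) as I. fold v K G in I.
  assert (HK : 0 <= K).
  { unfold K. apply Rmult_le_pos; [nra|]. left; apply Rinv_0_lt_compat.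
    assert (0 < 1 - Rabs x) by (unfold Rabs; destruct (Rcase_abs x); lra). nra. }
  assert (HG : 0 <= G).
  { unfold G. assert (0 < / m ^ 2) by (apply Rinv_0_lt_compat; nra).
    assert (0 < / (q - m) ^ 2) by (apply Rinv_0_lt_compat; nra). lra. }
  assert (S2 : 0 <= / (sin v) ^ 2) by (left; apply Rinv_0_lt_compat; nra).
  assert (H2 : h ^ 2 <= eta ^ 2) by (apply pow_incr; lra).
  assert (H4 : h ^ 4 <= 16 * eta ^ 2).
  { replace (h ^ 4) with (h ^ 2 * h ^ 2) by ring.
    assert (h ^ 2 <= 16) by (replace 16 with (4 ^ 2) by ring; apply pow_incr; lra).
    pose proof (pow2_ge_0 h). nra. }
  assert (U2 : u ^ 2 <= eta ^ 2 * (K * G)).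
  { unfold Rdiv in U. eapply Rle_trans; [exact U|].
    apply Rmult_le_compat; auto. apply pow2_ge_0. }
  assert (A2 : h ^ 4 / 2 + 2 * u ^ 2 <= 8 * eta ^ 2 + 2 * eta ^ 2 * (K * G)) by lra.
  assert (A3 : 4 * L * (w - 1) ^ 2 <= 4 * L * (8 * eta ^ 2 + 2 * eta ^ 2 * (K * G))).
  { apply Rmult_le_compat_l; lra. }
  assert (A4 : h ^ 2 / 2 <= L * eta ^ 2).
  { pose proof (pow2_ge_0 eta). nra. }
  lra.
Qed.

Lemma B_lower al k M x c : irrational al -> (1 <= k)%nat ->
  INR M < IZR (cf_q al k) -> 0 < c -> c < 1 -> -1 < x ->
  x <= 1 - IZR (cf_q al k) * dist_int (IZR (cf_q al k) * al) / (1 - c) ->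
  - 1000 * ln (4 / c) / ((1 - Rabs x) ^ 2 * (IZR (cf_a al (S k))) ^ 2) <= B al k M x.
Proof.
  intros Hirr Hk HM Hc Hc1 Hx Hxc.
  rewrite dist_ee in Hxc by auto.
  set (q := IZR (cf_q al k)) in *. set (d := ee al k) in *.
  set (a := IZR (cf_a al (S k))).
  pose proof (ee_pos al Hirr k) as Hd. fold d in Hd.
  pose proof (ee_lt al Hirr k) as Hdl. fold d q a in Hdl.
  pose proof (a_pos al Hirr k) as Ha. fold a in Ha.
  destruct (cf_main al Hirr k) as (_ & _ & HQ & _).
  assert (Hq : 1 <= q) by (apply IZR_le; lia).
  assert (HM0 : 0 <= INR M) by apply pos_INR.
  assert (Hqd : q * d <= (1 - c) * (1 - x)).
  { assert (q * d / (1 - c) <= 1 - x) by lra.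
    apply (Rmult_le_reg_r (/ (1 - c))). apply Rinv_0_lt_compat; lra.
    replace ((1 - c) * (1 - x) * / (1 - c)) with (1 - x) by (field; lra). lra. }
  assert (Hqd0 : 0 < q * d) by nra.
  assert (Hx1 : x < 1).
  { assert (0 < q * d / (1 - c)) by (apply Rdiv_lt_0_compat; lra). lra. }
  assert (HxM : x + INR M * d < 1) by nra.
  assert (Hda : q * d <= / a).
  { assert (d * (a * q) < 1).
    { apply (Rmult_lt_reg_r (/ (a * q))). apply Rinv_0_lt_compat; nra.
      rewrite Rmult_assoc, Rinv_r, Rmult_1_l, Rmult_1_r by nra. auto. }
    apply (Rmult_le_reg_r a); [lra|]. rewrite Rinv_l by lra. nra. }
  destruct (B_decomp al k M x Hirr Hk HM Hx HxM) as (r & Hr & Hinj & ->). fold q d.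
  set (eta := PI / (a * q)).
  set (K := q ^ 2 / (4 * (1 - Rabs x) ^ 2)).
  set (L := ln (4 / c)).
  set (G := fun n => / INR (r n) ^ 2 + / (q - INR (r n)) ^ 2).
  assert (Hterm : forall n, (1 <= n <= M)%nat ->
     - L * (33 * eta ^ 2 + 8 * eta ^ 2 * K * G n) <=
     ln (sin (PI * (INR (r n) + x) / q + PI * (INR n * d) / q) / sin (PI * (INR (r n) + x) / q)) -
     sin (PI * (INR n * d) / q) * cot (PI * (INR (r n) + x) / q)).
  { intros n Hn. destruct (r_bounds al k r n Hirr (Hr n Hn)) as [Hm1 Hm2]. fold q in Hm2.
    assert (INR n <= INR M) by (apply le_INR; lia). pose proof (pos_INR n).
    assert (Hnd : INR n * d < q * d) by nra.
    apply (term_lower q (INR (r n)) x (INR n * d) c a); auto; try nra.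
    apply (Rmult_le_reg_r (1 - x)); [lra|]. unfold Rdiv. rewrite Rmult_assoc, Rinv_l by lra. nra. }
  set (ZQ := Z.to_nat (cf_q al k)).
  assert (HZQ : INR ZQ = q) by (apply INR_toQ; auto).
  assert (HGsum : sum1 G M <= 4).
  { unfold G. rewrite sum1_plus.
    assert (S1 : sum1 (fun n => / INR (r n) ^ 2) M <= 2).
    { eapply Rle_trans; [apply (count_sum r (fun m => / INR m ^ 2) (ZQ - 1) M)|apply sum_inv_sq].
      - intro m. destruct (Req_dec (INR m) 0) as [E|E].
        + rewrite E. simpl. rewrite Rmult_0_l, Rinv_0. lra.
        + left. apply Rinv_0_lt_compat. pose proof (pos_INR m). nra.
      - auto.
      - auto. }
    assert (S2 : sum1 (fun n => / (q - INR (r n)) ^ 2) M <= 2).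
    { rewrite (sum1_ext _ (fun n => / INR (ZQ - r n) ^ 2)).
      2:{ intros n Hn. rewrite minus_INR, HZQ; auto. pose proof (Hr n Hn). lia. }
      eapply Rle_trans; [apply (count_sum (fun n => ZQ - r n)%nat (fun m => / INR m ^ 2) (ZQ - 1) M)|apply sum_inv_sq].
      - intro m. destruct (Req_dec (INR m) 0) as [E|E].
        + rewrite E. simpl. rewrite Rmult_0_l, Rinv_0. lra.
        + left. apply Rinv_0_lt_compat. pose proof (pos_INR m). nra.
      - intros n Hn. pose proof (Hr n Hn). fold ZQ in H. lia.
      - intros n1 n2 H1 H2 E. apply Hinj; auto. pose proof (Hr n1 H1). pose proof (Hr n2 H2).
        fold ZQ in H, H0. lia. }
    lra. }
  eapply Rle_trans; [|apply (sum1_le (fun n => - L * (33 * eta ^ 2 + 8 * eta ^ 2 * K * G n)))]; auto.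
  rewrite (sum1_ext _ (fun n => (- L * (33 * eta ^ 2)) + (- L * (8 * eta ^ 2 * K)) * G n))
    by (intros; ring).
  rewrite sum1_plus, sum1_const, sum1_scal.
  pose proof (L_ge1 c Hc Hc1) as HL. fold L in HL.
  assert (Hax : 0 < 1 - Rabs x) by (unfold Rabs; destruct (Rcase_abs x); lra).
  assert (Hax1 : (1 - Rabs x) ^ 2 <= 1).
  { assert (0 <= Rabs x) by apply Rabs_pos. nra. }
  set (D := (1 - Rabs x) ^ 2 * a ^ 2).
  assert (HD : 0 < D) by (unfold D; apply Rmult_lt_0_compat; apply pow_lt; lra).
  assert (Heta2 : eta ^ 2 * q = PI ^ 2 / (a ^ 2 * q)) by (unfold eta; field; lra).
  assert (HetaK : 8 * eta ^ 2 * K = 2 * PI ^ 2 / D) by (unfold eta, K, D; field; lra).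
  assert (E1 : INR M * (- L * (33 * eta ^ 2)) >= - L * 33 * PI ^ 2 / D).
  { assert (INR M * eta ^ 2 <= PI ^ 2 / D).
    { assert (INR M * eta ^ 2 <= q * eta ^ 2) by (pose proof (pow2_ge_0 eta); nra).
      assert (q * eta ^ 2 <= PI ^ 2 / D).
      { rewrite Rmult_comm, Heta2. unfold Rdiv. apply Rmult_le_compat_l; [nra|].
        apply Rinv_le_contravar; auto. unfold D. nra. }
      lra. }
    assert (- L * 33 * PI ^ 2 / D = - L * 33 * (PI ^ 2 / D)) by (field; lra).
    rewrite H0. nra. }
  assert (E2 : - L * (8 * eta ^ 2 * K) * sum1 G M >= - L * 8 * PI ^ 2 / D).
  { rewrite HetaK.
    assert (0 <= sum1 G M).
    { apply (Rle_trans _ (sum1 (fun _ => 0) M)); [rewrite sum1_const; lra|].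
      apply sum1_le. intros n Hn. unfold G. destruct (r_bounds al k r n Hirr (Hr n Hn)) as [Hb1 Hb2].
      fold q in Hb2. assert (0 < / INR (r n) ^ 2) by (apply Rinv_0_lt_compat; nra).
      assert (0 < / (q - INR (r n)) ^ 2) by (apply Rinv_0_lt_compat; nra). lra. }
    assert (0 < 2 * PI ^ 2 / D) by (apply Rdiv_lt_0_compat; auto; pose proof PI_RGT_0; nra).
    assert (- L * 8 * PI ^ 2 / D = - L * 4 * (2 * PI ^ 2 / D)) by (field; lra).
    rewrite H1. assert (HP : 0 <= L * (2 * PI ^ 2 / D)) by nra.
    pose proof (Rmult_le_compat_l _ _ _ HP HGsum). nra. }
  assert (- 1000 * L / D <= - L * 33 * PI ^ 2 / D + - L * 8 * PI ^ 2 / D).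
  { pose proof PI_4. pose proof PI_RGT_0.
    assert (PI ^ 2 <= 16) by (replace 16 with (4 ^ 2) by ring; apply pow_incr; lra).
    unfold Rdiv. rewrite <- Rmult_plus_distr_r. apply Rmult_le_compat_r.
    left; apply Rinv_0_lt_compat; auto. nra. }
  lra.
Qed.

Lemma alt_bound al k (b : nat -> nat) : irrational al -> forall L i,
  (forall l, (S i <= l < S i + L)%nat -> INR (b l) <= IZR (cf_a al (S l))) ->
  let V := fold_right Rplus 0 (map (fun l => (-1) ^ (k + l) * INR (b l) *
                 dist_int (IZR (cf_q al l) * al)) (seq (S i) L)) in
  - ee al (S i) <= (-1) ^ (k + S i) * V <= ee al i.
Proof.
  intros Hirr L. induction L; intros i Hb V.
  - unfold V. simpl. pose proof (ee_pos al Hirr (S i)). pose proof (ee_pos al Hirr i). lra.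
  - unfold V. rewrite <- cons_seq. simpl map. simpl fold_right.
    specialize (IHL (S i) ltac:(intros; apply Hb; lia)). simpl in IHL.
    set (V' := fold_right _ _ _) in *.
    rewrite dist_ee by (auto; lia).
    pose proof (ee_rec al Hirr i).
    pose proof (Hb (S i) ltac:(lia)). pose proof (pos_INR (b (S i))).
    pose proof (ee_pos al Hirr (S i)).
    replace (k + S (S i))%nat with (S (k + S i))%nat in IHL by lia. simpl pow in IHL.
    destruct (pow_m1 (k + S i)) as [E|E]; rewrite E in *; nra.
Qed.

Lemma pow_odd_k k : (-1) ^ (k + S k) = -1.
Proof.
  rewrite pow_add. simpl. destruct (pow_m1 k) as [E|E]; rewrite E; ring.
Qed.

Theorem proposition2 :
  exists C : R, 0 < C /\
  (* (i) *)
  (forall (alpha : R) (k M : nat) (x ck : R),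
     irrational alpha ->
     (1 <= k)%nat ->
     INR M < IZR (cf_q alpha k) ->
     10 / (IZR (cf_q alpha k)) ^ 2 <= ck -> ck < 1 ->
     IZR (cf_q alpha k) * dist_int (IZR (cf_q alpha k) * alpha) <= 1 - ck ->
     -1 < x ->
     x <= 1 - IZR (cf_q alpha k) * dist_int (IZR (cf_q alpha k) * alpha) / (1 - ck) ->
     - C * ln (4 / ck) / ((1 - Rabs x) ^ 2 * (IZR (cf_a alpha (S k))) ^ 2) <= B alpha k M x
     /\ B alpha k M x <= C / ((IZR (cf_a alpha (S k))) ^ 2 * IZR (cf_q alpha k))) /\
  (* (ii) *)
  (forall (alpha : R) (b : nat -> nat) (K k M bb : nat),
     irrational alpha ->
     ostrowski_digits alpha b K ->
     (1 <= k)%nat -> (k <= K - 1)%nat ->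
     INR M < IZR (cf_q alpha k) ->
     (bb + 1 <= b k)%nat ->
     B alpha k M (INR bb * IZR (cf_q alpha k) * dist_int (IZR (cf_q alpha k) * alpha)
                  + eps alpha b K k)
       <= C / ((IZR (cf_a alpha (S k))) ^ 2 * IZR (cf_q alpha k))).
Proof.
  exists 1000. split; [lra|]. split.
  - intros al k M x c Hirr Hk HM Hc Hc1 _ Hx Hxc.
    assert (Hq : 1 <= IZR (cf_q al k)).
    { destruct (cf_main al Hirr k) as (_ & _ & HQ & _). apply IZR_le; lia. }
    assert (Hc0 : 0 < c).
    { eapply Rlt_le_trans; [|exact Hc]. apply Rdiv_lt_0_compat; [lra|]. nra. }
    split.
    + apply B_lower; auto.
    + pose proof (a_pos al Hirr k).
      apply (Rle_trans _ 0).
      * rewrite dist_ee in Hxc by auto.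
        pose proof (ee_pos al Hirr k). pose proof (pos_INR M).
        apply B_nonpos; auto.
        assert (q_d : IZR (cf_q al k) * ee al k <= (1 - c) * (1 - x)).
        { assert (IZR (cf_q al k) * ee al k / (1 - c) <= 1 - x) by lra.
          apply (Rmult_le_reg_r (/ (1 - c))). apply Rinv_0_lt_compat; lra.
          replace ((1 - c) * (1 - x) * / (1 - c)) with (1 - x) by (field; lra). lra. }
        assert (0 < IZR (cf_q al k) * ee al k) by nra.
        assert (x < 1).
        { assert (0 < IZR (cf_q al k) * ee al k / (1 - c)) by (apply Rdiv_lt_0_compat; lra). lra. }
        nra.
      * left. apply Rdiv_lt_0_compat; [lra|]. nra.
  - intros al b K k M bb Hirr Host Hk HkK HM Hbb.
    destruct (Host ltac:(lia)) as (_ & Hb & _).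
    pose proof (a_pos al Hirr k) as Ha.
    assert (Hq : 1 <= IZR (cf_q al k)).
    { destruct (cf_main al Hirr k) as (_ & _ & HQ & _). apply IZR_le; lia. }
    apply (Rle_trans _ 0); [| left; apply Rdiv_lt_0_compat; [lra|]; nra].
    rewrite dist_ee by auto.
    pose proof (alt_bound al k b Hirr (K - S k) k) as AB.
    assert (HbR : forall l, (S k <= l < S k + (K - S k))%nat -> INR (b l) <= IZR (cf_a al (S l))).
    { intros l Hl. rewrite INR_IZR_INZ. apply IZR_le. apply Hb. lia. }
    specialize (AB HbR). simpl in AB. rewrite pow_odd_k in AB.
    unfold eps.
    set (V := fold_right _ _ _) in *.
    set (q := IZR (cf_q al k)) in *. set (d := ee al k) in *.
    pose proof (ee_pos al Hirr k) as Hd. fold d in Hd.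
    pose proof (ee_lt al Hirr k) as Hdl. fold d q in Hdl.
    assert (Hqd : q * d < 1).
    { assert (d * (IZR (cf_a al (S k)) * q) < 1).
      { apply (Rmult_lt_reg_r (/ (IZR (cf_a al (S k)) * q))). apply Rinv_0_lt_compat; nra.
        rewrite Rmult_assoc, Rinv_r, Rmult_1_l, Rmult_1_r by nra. auto. }
      nra. }
    assert (Hbb' : INR bb + 1 <= IZR (cf_a al (S k))).
    { pose proof (HbR k). rewrite <- S_INR. apply (Rle_trans _ (INR (b k))).
      apply le_INR; lia. rewrite INR_IZR_INZ. apply IZR_le. apply Hb. lia. }
    destruct k as [|i]; [lia|].
    pose proof (ee_rec al Hirr i) as Er. pose proof (qe_prev al Hirr i) as Qp.
    fold q d in Er, Qp.
    pose proof (ee_pos al Hirr (S (S i))).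
    pose proof (pos_INR bb). pose proof (pos_INR M).
    apply B_nonpos; auto; fold q d.
    + assert (0 <= q * (V + d)) by (apply Rmult_le_pos; lra). assert (0 <= INR bb * q * d) by (apply Rmult_le_pos; [apply Rmult_le_pos|]; lra). lra.
    + assert (INR bb * q * d <= (IZR (cf_a al (S (S i))) - 1) * q * d).
      { apply Rmult_le_compat_r; [lra|]. apply Rmult_le_compat_r; lra. }
      assert (INR M * d < q * d) by nra.
      nra.
Qed.
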